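(* (a) For the complete graph $K_n$ on $n$ vertices, $\mathrm{SOL}(K_n)=\Delta_n:=\{x\in\mathbb{R}^n\mid x\geq 0,\ \mathbf{e}^\top x=1\}$. (b) If $G$ is a forest, $x\in\mathrm{SOL}(G)$ and $\sigma(x)=V(G)$, then $G$ is a disjoint union of copies of $K_1$ and $K_2$. (c) If $G$ is a forest and $x\in\mathrm{SOL}(G)$, then the induced subgraph $G_{\sigma(x)}$ is a disjoint union of copies of $K_1$ and $K_2$. (d) If $R_{n,d}$ is a $d$-regular graph on $n$ vertices, then $\beta(R_{n,d})\geq \frac{n}{d+1}$.
   Context: All graphs are simple (finite, undirected, no loops). For a graph $H$ with adjacency matrix $A_H$, $\mathrm{SOL}(H)$ is the set of $x$ with $x\geq 0$, $(A_H+I)x\geq\mathbf{e}$ and $x^\top((A_H+I)x-\mathbf{e})=0$ ($I$ identity, $\mathbf{e}$ all-ones vector). $\sigma(x):=\{i\mid x_i>0\}$; $G_S$ is the subgraph induced by $S$. A forest is a graph without cycles. $\beta(G)$ is the minimum cardinality of a maximal independent set of $G$. *)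

(* Defs.v *)
From mathcomp Require Import all_boot all_order all_algebra.
Set Implicit Arguments. Unset Strict Implicit. Unset Printing Implicit Defensive.
Import Order.TTheory GRing.Theory Num.Theory.
Local Open Scope ring_scope.

Definition simple_graph (n : nat) (e : rel 'I_n) : Prop :=
  symmetric e /\ irreflexive e.

Definition complete_rel (n : nat) : rel 'I_n := fun i j => i != j.

Definition adjmx (R : nzRingType) (n : nat) (e : rel 'I_n) : 'M[R]_n :=
  \matrix_(i, j) (if e i j then 1 else 0).

Definition SOL (R : realFieldType) (n : nat) (e : rel 'I_n) (x : 'cV[R]_n) : Prop :=
  let M := adjmx R e + 1%:M in
  (forall i, 0 <= x i 0) /\
  (forall i, 1 <= (M *m x) i 0) /\
  x^T *m (M *m x - const_mx 1) = 0.

Definition supp (R : realFieldType) (n : nat) (x : 'cV[R]_n) : {set 'I_n} :=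
  [set i | 0 < x i 0].

Definition forest (n : nat) (e : rel 'I_n) : Prop :=
  forall s : seq 'I_n, (3 <= size s)%N -> ~~ ucycleb e s.

(* the induced subgraph G_S is a disjoint union of copies of K1 and K2,
   i.e. every vertex of S has at most one neighbour inside S *)
Definition union_K1_K2_on (n : nat) (e : rel 'I_n) (S : {set 'I_n}) : Prop :=
  forall v, v \in S -> (#|[set w in S | e v w]| <= 1)%N.

Definition regular (n : nat) (e : rel 'I_n) (d : nat) : Prop :=
  forall v, #|[set w | e v w]| = d.

Definition independent (n : nat) (e : rel 'I_n) (S : {set 'I_n}) : bool :=
  [forall i in S, forall j in S, ~~ e i j].

Definition maximal_independent (n : nat) (e : rel 'I_n) (S : {set 'I_n}) : bool :=
  independent e S && [forall U : {set 'I_n}, (S \proper U) ==> ~~ independent e U].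

Definition beta (n : nat) (e : rel 'I_n) : nat :=
  \big[minn/n]_(S : {set 'I_n} | maximal_independent e S) #|S|.

(* Main.v *)
Require Import Defs.
From mathcomp Require Import all_boot all_order all_algebra.
From mathcomp Require Import lra zify.
Import Order.TTheory GRing.Theory Num.Theory.
Set Implicit Arguments. Unset Strict Implicit.

Lemma sorted_drop' (T : Type) (e : rel T) p i : sorted e p -> sorted e (drop i p).
Proof.
elim: p i => [|y p IH] [|i] //= H; apply: IH; exact: path_sorted H.
Qed.

Lemma last_drop' (T : Type) (x0 : T) p i : i < size p -> last x0 (drop i p) = last x0 p.
Proof.
elim: p i => [|y p IH] [|i] //= Hi; rewrite IH //.
by case: p {IH} Hi.
Qed.

Lemma drop_ucycle (T : eqType) (e : rel T) x0 p c :
  sorted e p -> uniq p -> c \in p -> e (last x0 p) c ->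
  ucycleb e (drop (index c p) p).
Proof.
move=> sp up cp ec; have ilt : index c p < size p by rewrite index_mem.
rewrite /ucycleb drop_uniq // andbT (drop_nth x0 ilt) nth_index //=.
have sd := sorted_drop' (index c p) sp.
rewrite (drop_nth x0 ilt) nth_index //= in sd.
rewrite rcons_path sd /=.
have := last_drop' x0 ilt; rewrite (drop_nth x0 ilt) nth_index //= => ->.
exact: ec.
Qed.

Lemma drop_size (T : eqType) (e : rel T) x0 p c : irreflexive e ->
  c \in p -> e (last x0 p) c ->
  3 <= size (drop (index c p) p) \/ (index c p).+2 = size p.
Proof.
move=> irr cp ec; have ilt : index c p < size p by rewrite index_mem.
rewrite size_drop.
case: (leqP 3 (size p - index c p)) => H; first by left.
right.
have : size p - index c p != 1.
  apply/negP => /eqP H1.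
  have : drop (index c p) p = [:: c].
    rewrite (drop_nth x0 ilt) nth_index //; congr (_ :: _).
    by apply/eqP; rewrite -size_eq0 size_drop; apply/eqP; lia.
  move=> Hd; move: ec; rewrite -(last_drop' x0 ilt) Hd /=.
  by rewrite irr.
lia.
Qed.

Lemma cyc_main (T : finType) (e : rel T) (D : T -> Prop) : irreflexive e ->
  (forall u, D u -> exists a b, a != b /\ e u a /\ e u b /\ D a /\ D b) ->
  forall k p x0, #|T| - size p < k -> p != [::] -> sorted e p -> uniq p ->
  D (last x0 p) -> exists s, (3 <= size s) && ucycleb e s.
Proof.
move=> irr HD; elim=> [//|k IH] p x0 Hk p0 sp up Du.
have [a [b [ab [ea [eb [Da Db]]]]]] := HD _ Du.
have ext : forall c, e (last x0 p) c -> D c -> c \notin p ->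
    exists s, (3 <= size s) && ucycleb e s.
  move=> c ec Dc cp; apply: (IH (rcons p c) x0).
  - have : size (rcons p c) <= #|T|.
      by rewrite -(card_uniqP _) ?rcons_uniq ?cp ?up // max_card.
    rewrite size_rcons; lia.
  - by rewrite -size_eq0 size_rcons.
  - by case: p p0 sp ec {Du Hk up cp ea eb} => [//|y q] _ /= sp ec; rewrite rcons_path sp.
  - by rewrite rcons_uniq cp up.
  - by rewrite last_rcons.
case: (boolP (a \in p)) => ap; last exact: (ext a ea Da ap).
case: (boolP (b \in p)) => bp; last exact: (ext b eb Db bp).
have [H1|Ha] := drop_size irr ap ea.
  by exists (drop (index a p) p); rewrite H1 (drop_ucycle sp up ap ea).
have [H1|Hb] := drop_size irr bp eb.
  by exists (drop (index b p) p); rewrite H1 (drop_ucycle sp up bp eb).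
have iab : index a p = index b p by apply/eqP; rewrite -eqSS -eqSS Ha Hb.
by move: ab; rewrite -(nth_index x0 ap) -(nth_index x0 bp) iab eqxx.
Qed.

Lemma cyc (T : finType) (e : rel T) (D : T -> Prop) : irreflexive e ->
  (forall u, D u -> exists a b, a != b /\ e u a /\ e u b /\ D a /\ D b) ->
  forall v, D v -> exists s, (3 <= size s) && ucycleb e s.
Proof.
move=> irr HD v Dv; apply: (cyc_main irr HD (k := #|T|.+1) (p := [:: v]) (x0 := v)) => //.
lia.
Qed.
Local Open Scope ring_scope.
Lemma Mx_E (R : realFieldType) n (e : rel 'I_n) (x : 'cV[R]_n) i :
  ((adjmx R e + 1%:M) *m x) i 0 = x i 0 + \sum_(j | e i j) x j 0.
Proof.
rewrite mulmxDl mul1mx mxE addrC; congr (_ + _).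
rewrite mxE [RHS]big_mkcond /=; apply: eq_bigr => j _; rewrite mxE.
by case: (e i j); rewrite ?mul1r ?mul0r.
Qed.

Lemma SOL_comp (R : realFieldType) n (e : rel 'I_n) (x : 'cV[R]_n) i :
  SOL e x -> 0 < x i 0 -> ((adjmx R e + 1%:M) *m x) i 0 = 1.
Proof.
case=> x0 [M1 C] xp.
move: M1 C; set y := (_ *m x) => M1 C; clearbody y.
have := congr1 (fun A : 'M[R]_1 => A 0 0) C; rewrite !mxE /=.
under eq_bigr => j _ do rewrite !mxE.
move/psumr_eq0P => H.
have /eqP : x i 0 * (y i 0 - 1) = 0.
  by apply: H => // j _; rewrite mulr_ge0 ?subr_ge0.
by rewrite mulf_eq0 (gt_eqF xp) /= subr_eq0 => /eqP.
Qed.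

Lemma D_step (R : realFieldType) n (e : rel 'I_n) (x : 'cV[R]_n) u w :
  simple_graph e -> SOL e x -> u \in supp x ->
  (exists a b, a != b /\ a \in supp x /\ b \in supp x /\ e u a /\ e u b) ->
  e u w -> w \in supp x ->
  exists a b, a != b /\ a \in supp x /\ b \in supp x /\ e w a /\ e w b.
Proof.
move=> [sym irr] sol uS [a [b [ab [aS [bS [ea eb]]]]]] euw wS.
case: (boolP [exists c, [&& c \in supp x, e w c & c != u]]) =>
  [/existsP[c /and3P[cS ewc cu]] | /existsPn Hn].
  by exists u, c; rewrite eq_sym cu uS cS sym euw ewc.
exfalso.
have xge := sol.1.
have pos : forall i, i \in supp x -> 0 < x i 0 by move=> i; rewrite inE.
have Mw := SOL_comp sol (pos _ wS); rewrite Mx_E in Mw.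
have Mu := SOL_comp sol (pos _ uS); rewrite Mx_E in Mu.
have sw : \sum_(j | e w j) x j 0 = x u 0.
  rewrite (bigD1 u) /=; last by rewrite sym.
  rewrite big1 ?addr0 // => j /andP[ewj ju].
  have := Hn j; rewrite ewj ju !andbT inE -leNgt => H.
  by apply: le_anti; rewrite H xge.
have [c [cS [euc cw]]] : exists c, c \in supp x /\ e u c /\ c != w.
  case: (eqVneq a w) => [aw|aw]; last by exists a.
  by exists b; rewrite bS eb -aw eq_sym ab.
have su : x w 0 + x c 0 <= \sum_(j | e u j) x j 0.
  rewrite (bigD1 w) //= (bigD1 c) /=; last by rewrite euc cw.
  by rewrite addrA lerDl sumr_ge0 // => j _; exact: xge.
have := pos c cS; rewrite sw in Mw; lra.
Qed.
Lemma Mx_complete (R : realFieldType) n (x : 'cV[R]_n) i :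
  ((adjmx R (@complete_rel n) + 1%:M) *m x) i 0 = \sum_j x j 0.
Proof.
rewrite Mx_E [RHS](bigD1 i) //=; congr (_ + _); apply: eq_bigl => j.
by rewrite /complete_rel eq_sym.
Qed.

Lemma partA (R : realFieldType) (n : nat) : (0 < n)%N ->
     forall x : 'cV[R]_n,
       SOL (@complete_rel n) x <-> ((forall i, 0 <= x i 0) /\ \sum_i x i 0 = 1).
Proof.
move=> n0 x; split.
  case=> x0 [M1 C]; split => //.
  have s1 := M1 (Ordinal n0); rewrite Mx_complete in s1.
  have Y := Mx_complete x; move: Y C; set y := (_ *m x) => Y C; clearbody y.
  have := congr1 (fun A : 'M[R]_1 => A 0 0) C; rewrite !mxE /=.
  under eq_bigr => j _ do rewrite !mxE Y.
  rewrite -mulr_suml => /eqP; rewrite mulf_eq0 subr_eq0 => /orP[/eqP s0|/eqP //].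
  by move: s1; rewrite s0 ler10.
case=> x0 s1; split => //; split.
  by move=> i; rewrite Mx_complete s1.
have -> : (adjmx R (@complete_rel n) + 1%:M) *m x - const_mx 1 = 0.
  have Y := Mx_complete x; move: Y; set y := (_ *m x) => Y; clearbody y.
  by apply/matrixP => i j; rewrite !mxE (ord1 j) Y s1 subrr.
by rewrite mulmx0.
Qed.
Local Close Scope ring_scope.
Lemma card_bigcup_le (T I : finType) (A : {pred I}) (F : I -> {set T}) :
  #|\bigcup_(i in A) F i| <= \sum_(i in A) #|F i|.
Proof.
elim/big_rec2: _ => [|i y1 y2 _ H]; first by rewrite cards0. apply: leq_trans (leq_card_setU _ _) _.
by rewrite leq_add2l.
Qed.

Lemma dom n (e : rel 'I_n) S : simple_graph e -> maximal_independent e S ->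
  forall v, v \notin S -> exists2 s, s \in S & e s v.
Proof.
case=> sym irr /andP[indS /forallP maxS] v vS.
apply/exists_inP; apply: contraT; rewrite negb_exists_in => /forall_inP H.
have := maxS (v |: S); rewrite properUr /=; last by rewrite sub1set.
move=> Hn; suff : independent e (v |: S) by rewrite (negbTE Hn).
apply/forall_inP => i; rewrite in_setU1 => /orP[/eqP->|iS];
  apply/forall_inP => j; rewrite in_setU1 => /orP[/eqP->|jS].
- by rewrite irr.
- by rewrite sym; apply: H.
- by apply: H.
- by move/forall_inP: indS => /(_ i iS) /forall_inP; apply.
Qed.

Lemma partD_nat n d (e : rel 'I_n) :
  simple_graph e -> regular e d -> n <= d.+1 * beta e.
Proof.
move=> sg reg; rewrite /beta.
apply: (big_ind (fun m => n <= d.+1 * m)).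
- by rewrite leq_pmull.
- by move=> a b Ha Hb; case: (leqP a b) => ab; rewrite ?(minn_idPl ab) ?(minn_idPr (ltnW ab)).
move=> S mS.
have sub : [set: 'I_n] \subset \bigcup_(s in S) (s |: [set w | e s w]).
  apply/subsetP => v _; case: (boolP (v \in S)) => vS.
    by apply/bigcupP; exists v => //; rewrite setU11.
  have [s sS esv] := dom sg mS vS.
  by apply/bigcupP; exists s => //; rewrite in_setU1 inE esv orbT.
have := subset_leq_card sub; rewrite cardsT card_ord => /leq_trans; apply.
apply: leq_trans (card_bigcup_le _ _) _.
rewrite mulnC -sum_nat_const; apply: leq_sum => s _.
by rewrite cardsU1 reg; case: (_ \notin _).
Qed.

Local Open Scope ring_scope.
Lemma partD (R : realFieldType) (n d : nat) (e : rel 'I_n) :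
     simple_graph e -> regular e d ->
     (n%:R / (d.+1)%:R : R) <= (beta e)%:R.
Proof.
move=> sg reg; rewrite ler_pdivrMr ?ltr0Sn // -natrM ler_nat mulnC.
exact: partD_nat.
Qed.

Lemma partC (R : realFieldType) (n : nat) (e : rel 'I_n) (x : 'cV[R]_n) :
  simple_graph e -> forest e -> SOL e x -> union_K1_K2_on e (supp x).
Proof.
move=> sg fo sol v vS; rewrite leqNgt; apply/negP => /card_gt1P[a [b [aS bS ab]]].
move: aS bS; rewrite !inE => /andP[aS ea] /andP[bS eb].
have {}aS : a \in supp x by rewrite inE.
have {}bS : b \in supp x by rewrite inE.
pose D u := u \in supp x /\
  exists a b, a != b /\ a \in supp x /\ b \in supp x /\ e u a /\ e u b.
have HD : forall u, D u -> exists a b, a != b /\ e u a /\ e u b /\ D a /\ D b.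
  move=> u [uS [a' [b' [ab' [aS' [bS' [ea' eb']]]]]]].
  exists a', b'; do 3!split => //; split; split => //.
  - exact: (D_step sg sol uS (ex_intro _ a' (ex_intro _ b' (conj ab' (conj aS' (conj bS' (conj ea' eb'))))))).
  - exact: (D_step sg sol uS (ex_intro _ a' (ex_intro _ b' (conj ab' (conj aS' (conj bS' (conj ea' eb'))))))).
have [s /andP[s3 us]] := cyc sg.2 HD (v := v) (conj vS (ex_intro _ a (ex_intro _ b (conj ab (conj aS (conj bS (conj ea eb))))))).
by move: (fo s s3); rewrite us.
Qed.

Theorem lemma4 :
  (* (a) *)
  (forall (R : realFieldType) (n : nat), (0 < n)%N ->
     forall x : 'cV[R]_n,
       SOL (@complete_rel n) x <-> ((forall i, 0 <= x i 0) /\ \sum_i x i 0 = 1))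
  /\
  (* (b) *)
  (forall (R : realFieldType) (n : nat) (e : rel 'I_n) (x : 'cV[R]_n),
     simple_graph e -> forest e -> SOL e x -> supp x = [set: 'I_n] ->
     union_K1_K2_on e [set: 'I_n])
  /\
  (* (c) *)
  (forall (R : realFieldType) (n : nat) (e : rel 'I_n) (x : 'cV[R]_n),
     simple_graph e -> forest e -> SOL e x ->
     union_K1_K2_on e (supp x))
  /\
  (* (d) *)
  (forall (R : realFieldType) (n d : nat) (e : rel 'I_n),
     simple_graph e -> regular e d ->
     (n%:R / (d.+1)%:R : R) <= (beta e)%:R).
Proof.
split; first exact: partA.
split; first by move=> R n e x sg fo sol <-; exact: partC.
split; first exact: partC.
exact: partD.
Qed.
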